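(* Let $\mathcal{A}$ be a finite set of players and $\mathcal{R}$ a finite set of resources; each player $i$ has a finite strategy set $\Gamma_i$, each $\gamma_i\in\Gamma_i$ determining a set $\gamma_i^{\mathrm{cg}}\subseteq\mathcal{R}$. For $\gamma\in\Gamma=\prod_i\Gamma_i$ let $l_r(\gamma)=\sum_i\mathbf{1}[r\in\gamma_i^{\mathrm{cg}}]$, and let each $J_r$ be a polynomial with non-negative coefficients of degree at most $d$. Player costs are $J_i(\gamma)=\sum_{r\in\gamma_i^{\mathrm{cg}}}J_r(l_r(\gamma))+J_i^{\mathrm{per}}(\gamma_i)$ with $J_i^{\mathrm{per}}\ge0$ depending only on $\gamma_i$. Let $C=\sum_iJ_i$, $\Gamma_{\mathrm{NE}}$ the set of pure Nash equilibria, $\Gamma^\star=\arg\min_\Gamma C$, $\mathrm{PoA}=\max_{\Gamma_{\mathrm{NE}}}C/\min_\Gamma C$, and $\alpha^\star\ge0$ the largest constant with $J_i^{\mathrm{per}}(\gamma_i)\ge\alpha^\star\sum_{r\in\gamma_i^{\mathrm{cg}}}J_r(l_r(\gamma))$ for all $i$ and all $\gamma\in\Gamma_{\mathrm{NE}}\cup\Gamma^\star$. Let $\mathcal{P}_d$ denote the set of polynomials of degree at most $d$ with non-negative coefficients. Then $\mathrm{PoA}$ is at most $$\min_{\tilde\lambda\in\mathbb{R},\ \tilde\mu\in(0,1+\alpha^\star)}\ \frac{\tilde\lambda+\alpha^\star}{1-\tilde\mu+\alpha^\star}\quad\text{s.t.}\quad y\,J(x+1)\le\tilde\lambda\,y\,J(y)+\tilde\mu\,x\,J(x)\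 \ \forall x,y\in\mathbb{N}_0,\ J\in\mathcal{P}_d.$$
   Context: This is the congestion-game model of urban driving games (resources are space-time-proximity grid cells). A pure Nash equilibrium is a $\gamma$ with $J_i(\gamma)\le J_i(\gamma_i',\gamma_{-i})$ for all $i$ and $\gamma_i'\in\Gamma_i$. *)

(* Defs.v *)
From HB Require Import structures.
From mathcomp Require Import all_boot all_order all_algebra.
Set Implicit Arguments. Unset Strict Implicit. Unset Printing Implicit Defensive.
Import Order.TTheory GRing.Theory Num.Theory.
Local Open Scope ring_scope.

(* Congestion game data:
   A   : finite set of players
   Rs  : finite set of resources
   S   : a finite ambient type of strategies; Gam i : {set S} is Gamma_i
   cg i s : {set Rs}  is gamma_i^cg for the strategy s of player i
   Jr r : {poly R}    is the resource cost J_r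
   Jper i s           is J_i^per(gamma_i) *)

Definition feasible (A S : finType) (Gam : A -> {set S}) (g : {ffun A -> S}) :=
  forall i, g i \in Gam i.

Definition load (A S Rs : finType) (cg : A -> S -> {set Rs})
  (g : {ffun A -> S}) (r : Rs) : nat :=
  #|[set i | r \in cg i (g i)]|.

Definition cong_cost (R : realFieldType) (A S Rs : finType)
  (cg : A -> S -> {set Rs}) (Jr : Rs -> {poly R})
  (i : A) (g : {ffun A -> S}) : R :=
  \sum_(r in cg i (g i)) (Jr r).[(load cg g r)%:R].

Definition pcost (R : realFieldType) (A S Rs : finType)
  (cg : A -> S -> {set Rs}) (Jr : Rs -> {poly R}) (Jper : A -> S -> R)
  (i : A) (g : {ffun A -> S}) : R :=
  cong_cost cg Jr i g + Jper i (g i).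

Definition scost (R : realFieldType) (A S Rs : finType)
  (cg : A -> S -> {set Rs}) (Jr : Rs -> {poly R}) (Jper : A -> S -> R)
  (g : {ffun A -> S}) : R :=
  \sum_i pcost cg Jr Jper i g.

Definition deviate (A S : finType) (g : {ffun A -> S}) (i : A) (s : S)
  : {ffun A -> S} :=
  [ffun j => if j == i then s else g j].

Definition is_NE (R : realFieldType) (A S Rs : finType) (Gam : A -> {set S})
  (cg : A -> S -> {set Rs}) (Jr : Rs -> {poly R}) (Jper : A -> S -> R)
  (g : {ffun A -> S}) : Prop :=
  feasible Gam g /\
  forall i s, s \in Gam i ->
    pcost cg Jr Jper i g <= pcost cg Jr Jper i (deviate g i s).

Definition is_opt (R : realFieldType) (A S Rs : finType) (Gam : A -> {set S})
  (cg : A -> S -> {set Rs}) (Jr : Rs -> {poly R}) (Jper : A -> S -> R)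
  (g : {ffun A -> S}) : Prop :=
  feasible Gam g /\
  forall g', feasible Gam g' -> scost cg Jr Jper g <= scost cg Jr Jper g'.

Definition in_Pd (R : realFieldType) (d : nat) (p : {poly R}) : Prop :=
  (size p <= d.+1)%N /\ forall k, 0 <= p`_k.

Definition alpha_valid (R : realFieldType) (A S Rs : finType) (Gam : A -> {set S})
  (cg : A -> S -> {set Rs}) (Jr : Rs -> {poly R}) (Jper : A -> S -> R)
  (a : R) : Prop :=
  0 <= a /\
  forall g, is_NE Gam cg Jr Jper g \/ is_opt Gam cg Jr Jper g ->
    forall i, a * cong_cost cg Jr i g <= Jper i (g i).

Definition lm_feasible (R : realFieldType) (d : nat) (a lam mu : R) : Prop :=
  0 < mu < 1 + a /\
  forall (x y : nat) (p : {poly R}), in_Pd d p ->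
    y%:R * p.[(x.+1)%:R] <= lam * (y%:R * p.[y%:R]) + mu * (x%:R * p.[x%:R]).

(* Main.v *)
Require Import Defs.
From HB Require Import structures.
From mathcomp Require Import all_boot all_order all_algebra.
From mathcomp Require Import lra.
Import Order.TTheory GRing.Theory Num.Theory.
Local Open Scope ring_scope.

Lemma poly_mono (R : realFieldType) (p : {poly R}) (x y : R) :
  (forall k, 0 <= p`_k) -> 0 <= x -> x <= y -> p.[x] <= p.[y].
Proof.
move=> hp hx hxy; rewrite !horner_coef; apply: ler_sum => i _.
apply: ler_wpM2l => //; apply: lerXn2r => //; rewrite nnegrE //.
exact: le_trans hxy.
Qed.

Lemma sum_load (R : realFieldType) (A S Rs : finType) (cg : A -> S -> {set Rs})
  (h : {ffun A -> S}) (F : Rs -> R) :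
  \sum_i \sum_(r in cg i (h i)) F r = \sum_r (load cg h r)%:R * F r.
Proof.
under eq_bigr do rewrite big_mkcond /=.
rewrite exchange_big /=; apply: eq_bigr => r _.
rewrite -big_mkcond /= mulr_natl /load -sumr_const.
by apply: eq_bigl => i; rewrite inE.
Qed.

Lemma load_dev (A S Rs : finType) (cg : A -> S -> {set Rs})
  (g : {ffun A -> S}) i s r :
  (load cg (deviate g i s) r <= (load cg g r).+1)%N.
Proof.
rewrite /load.
apply: leq_trans (subset_leq_card (_ : _ \subset i |: [set j | r \in cg j (g j)])) _.
  apply/subsetP => j; rewrite !inE ffunE; case: eqP => [->|ne] //= ->.
by rewrite cardsU1 -add1n leq_add2r leq_b1.
Qed.

Theorem lemma1 (R : realFieldType) (A S Rs : finType) (Gam : A -> {set S})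
  (cg : A -> S -> {set Rs}) (d : nat) (Jr : Rs -> {poly R})
  (Jper : A -> S -> R)
  (hJr : forall r, in_Pd d (Jr r))
  (hJper : forall i s, s \in Gam i -> 0 <= Jper i s)
  (astar : R)
  (ha : alpha_valid Gam cg Jr Jper astar)
  (hamax : forall b, alpha_valid Gam cg Jr Jper b -> b <= astar)
  (lam mu : R) (hlm : lm_feasible d astar lam mu)
  (gNE gopt : {ffun A -> S})
  (hNE : is_NE Gam cg Jr Jper gNE) (hopt : is_opt Gam cg Jr Jper gopt) :
  scost cg Jr Jper gNE <=
    (lam + astar) / (1 - mu + astar) * scost cg Jr Jper gopt.
Proof.
set g := gNE; set o := gopt.
case: hlm => /andP[mu0 mu1] hsm.
case: ha => a0 hav.
have lam1 : 1 <= lam.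
  have hp : in_Pd d (1 : {poly R}).
    split; first by rewrite size_polyC; case: (1 != 0).
    by move=> k; rewrite coefC; case: (k == 0%N).
  have := hsm 0%N 1%N 1 hp.
  by rewrite !hornerC !mul1r !mul0r mulr0 addr0 mulr1.
pose K h := \sum_r (load cg h r)%:R * (Jr r).[(load cg h r)%:R].
pose P (h : {ffun A -> S}) := \sum_i Jper i (h i).
have hC : forall h, scost cg Jr Jper h = K h + P h.
  by move=> h; rewrite /scost /pcost big_split /= /cong_cost sum_load.
have hal : forall h, is_NE Gam cg Jr Jper h \/ is_opt Gam cg Jr Jper h ->
    astar * K h <= P h.
  move=> h hh; rewrite /K -sum_load mulr_sumr; apply: ler_sum => i _.
  exact: hav.
have halg := hal g (or_introl hNE).
have halo := hal o (or_intror hopt).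
have hNEb : scost cg Jr Jper g <=
   \sum_r (load cg o r)%:R * (Jr r).[(load cg g r).+1%:R] + P o.
  rewrite -sum_load /P -big_split /=; apply: ler_sum => i _.
  case: hNE => _ hN.
  apply: le_trans (hN i (o i) (proj1 hopt i)) _.
  have hdi : deviate g i (o i) i = o i by rewrite ffunE eqxx.
  rewrite /pcost /cong_cost hdi lerD2r; apply: ler_sum => r _.
  apply: poly_mono; first exact: (proj2 (hJr r)).
    exact: ler0n.
  by rewrite ler_nat; exact: load_dev.
have hsmb : \sum_r (load cg o r)%:R * (Jr r).[(load cg g r).+1%:R]
    <= lam * K o + mu * K g.
  rewrite /K !mulr_sumr -big_split /=; apply: ler_sum => r _.
  exact: hsm.
rewrite !hC in hNEb *.
have hden : 0 < 1 - mu + astar by lra.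
rewrite mulrAC ler_pdivlMr //.
have h1 : 0 <= mu * (P g - astar * K g) by apply: mulr_ge0; lra.
have h2 : 0 <= (lam - 1) * (P o - astar * K o) by apply: mulr_ge0; lra.
have h3 : 0 <= (1 + astar) * (lam * K o + mu * K g + P o - K g - P g)
  by apply: mulr_ge0; lra.
lra.
Qed.
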